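(* Let $\alpha_1,\alpha_2$ be distinct closed cells of $\widetilde{V}_1$ whose intersection $\alpha=\alpha_1\cap\alpha_2$ is a common face. Then $N^\circ_{\alpha_1}\cap N^\circ_{\alpha_2}=N^\circ_{\alpha}$.
   Context: Let $\widetilde{W}$ be the well-rounded retract for $\mathrm{SL}_4$: the set of positive definite real symmetric $4\times4$ matrices $A$ with $\min\{xAx^t: x\in\mathbb{Z}^4\setminus\{0\}\}=1$ whose minimal vectors span $\mathbb{R}^4$; it is a locally finite regular cell complex with convex closed cells, and with respect to a fixed triangulation its first barycentric subdivision is a simplicial complex. Let $\sigma$ be the $6$-cell whose minimal vectors are $\pm e_1,\dots,\pm e_4$, let $\mathrm{Sp}_4(\mathbb{Z})$ be the integer matrices $g$ with $g\Omega g^t=\Omega$ for $\Omega$ with rows $(0,0,0,1),(0,0,1,0),(0,-1,0,0),(-1,0,0,0)$, acting by $A\mapsto \gamma A\gamma^t$, and let $\widetilde{V}_1=\bigcup_{\gamma\in\mathrm{Sp}_4(\mathbb{Z})}\gamma\cdot\sigma$, viewed as a simplicial subcomplex of the first barycentric subdivision of $\widetilde{W}$. For a simplicial complex $K$ and a vertex $v$, $\overline{\mathrm{star}}(v;K)$ is the closure of the set of simplices having $v$ as a face; for a full subcomplex $K_0$ (no simplex of $K\setminus K_0$ has all vertices in $K_0$), $N(K_0;K)=\bigcup_{v\text{ vertex of }K_0}\overline{\mathrm{star}}(v;K)$. Writing $K^{(2)}$ for the second barycentric subdivision, for each closed cell $\alpha$ of $\widetilde{V}_1$ let $N_\alpha=|N(\alpha^{(2)};\widetilde{V}_1^{(2)})|$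 (the second derived neighborhood of $\alpha$) and $N^\circ_\alpha$ its interior. *)

(* Defs.v *)
From HB Require Import structures.
From mathcomp Require Import all_boot all_order all_algebra.
From mathcomp Require Import boolp classical_sets reals.
From Stdlib Require List.
Set Implicit Arguments. Unset Strict Implicit. Unset Printing Implicit Defensive.
Import Order.TTheory GRing.Theory Num.Theory.
Local Open Scope ring_scope.
Local Open Scope classical_set_scope.

Section WR.
Variable R : realType.
Notation M := 'M[R]_4.

Definition toR (m n : nat) (x : 'M[int]_(m, n)) : 'M[R]_(m, n) :=
  map_mx (fun z : int => z%:~R) x.

Definition qf (A : M) (x : 'rV[R]_4) : R := (x *m A *m x^T) 0 0.

Definition symmetric (A : M) : Prop := A^T = A.
Definition posdef (A : M) : Prop :=
  symmetric A /\ forall x : 'rV[R]_4, x != 0 -> 0 < qf A x.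

(* minimal vectors (for A with arithmetic minimum 1) *)
Definition Min (A : M) : set 'rV[int]_4 :=
  [set x | x != 0 /\ qf A (toR x) = 1].

Definition inW (A : M) : Prop :=
  posdef A /\
  (forall x : 'rV[int]_4, x != 0 -> 1 <= qf A (toR x)) /\
  (* the minimal vectors span R^4: four of them are linearly independent *)
  (exists B : 'M[int]_4, (forall i, Min A (row i B)) /\ \det (toR B) != 0).

Definition cellof (S : set 'rV[int]_4) : set M :=
  [set A | inW A /\ S `<=` Min A].

Definition cell (a : set M) : Prop :=
  exists A0, inW A0 /\ a = cellof (Min A0).

(* points of the open cell (relative interior) of a closed cell a *)
Definition opencell (a : set M) : set M :=
  [set A | inW A /\ a = cellof (Min A)].

Definition sigma : set M :=
  cellof [set x | exists i : 'I_4, x = delta_mx 0 i \/ x = - delta_mx 0 i].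

Definition Omega : 'M[int]_4 :=
  \matrix_(i, j) (if (i + j == 3)%N then (if (i < j)%N then 1 else -1) else 0).
Definition Sp4Z (g : 'M[int]_4) : Prop := g *m Omega *m g^T = Omega.

Definition act (g : 'M[int]_4) (A : M) : M := toR g *m A *m (toR g)^T.

Definition V1 : set M :=
  [set A | exists g, Sp4Z g /\ (act g @` sigma) A].

Definition cellV1 (a : set M) : Prop :=
  cell a /\ exists g, Sp4Z g /\ a `<=` act g @` sigma.

(* a simplex = nonempty chain of cells of V~_1, listed increasingly *)
Definition psub (T : Type) (a c : set T) : Prop := a `<=` c /\ a <> c.

Definition K1simplex (s : seq (set M)) : Prop :=
  s <> [::] /\ (forall a, List.In a s -> cellV1 a) /\
  (forall i j, (i < j < size s)%N -> psub (nth set0 s i) (nth set0 s j)).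

(* t is a face of the chain s *)
Definition subchain (t s : seq (set M)) : Prop := forall a, List.In a t -> List.In a s.
Definition psubchain (t s : seq (set M)) : Prop := subchain t s /\ ~ subchain s t.

(* geometric position of a vertex of the second subdivision: barycenter of
   a simplex of the first one, whose vertices are the chosen points b a *)
Definition bary1 (b : set M -> M) (s : seq (set M)) : M :=
  (size s)%:R^-1 *: \sum_(a <- s) b a.

Definition K2simplex (C : seq (seq (set M))) : Prop :=
  C <> [::] /\ (forall s, List.In s C -> K1simplex s) /\
  (forall i j, (i < j < size C)%N -> psubchain (nth [::] C i) (nth [::] C j)).

Definition hull (ps : seq M) : set M :=
  [set x | exists t : 'I_(size ps) -> R,
     (forall i, 0 <= t i) /\ \sum_i t i = 1 /\
     x = \sum_i t i *: nth 0 ps i].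

(* s is a simplex of the first subdivision lying in the cell a,
   i.e. a vertex of a^(2) *)
Definition in_cell (s : seq (set M)) (a : set M) : Prop :=
  forall c, List.In c s -> c `<=` a.

(* N_a = |N(a^(2); V~_1^(2))| : union of the closed stars in V~_1^(2)
   of the vertices of a^(2) *)
Definition Nbhd (b : set M -> M) (a : set M) : set M :=
  [set x | exists C, K2simplex C /\
     (exists s, List.In s C /\ in_cell s a) /\
     hull (map (bary1 b) C) x].

(* interior of N relative to |V~_1^(2)| = |V~_1| (sup metric on entries) *)
Definition relint (N : set M) : set M :=
  [set x | N x /\ exists e : R, 0 < e /\
     forall y, V1 y -> (forall i j, `|y i j - x i j| < e) -> N y].

Definition Nint (b : set M -> M) (a : set M) : set M := relint (Nbhd b a).

End WR.

(* Main.v *)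
Require Import Defs.
From HB Require Import structures.
From mathcomp Require Import all_boot all_order all_algebra.
From mathcomp Require Import boolp classical_sets reals.
From mathcomp Require Import lra.
Set Implicit Arguments. Unset Strict Implicit. Unset Printing Implicit Defensive.
Local Open Scope classical_set_scope.
Local Open Scope ring_scope.
Import Order.TTheory GRing.Theory Num.Theory.

Section Proof1.
Variable R : realType.
Local Notation M := 'M[R]_4.
Variable b : set M -> M.
Hypothesis hb : forall a, cellV1 a -> opencell a (b a).

Lemma InE (T : eqType) (x : T) (s : seq T) : List.In x s <-> x \in s.
Proof.
elim: s => [|y s IH] //=; rewrite in_cons; split.
- by case=> [->|/IH ->]; rewrite ?eqxx ?orbT.
- by case/orP=> [/eqP ->|/IH]; [left|right].
Qed.

Definition chain (L : seq (set M)) :=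
  (forall c, c \in L -> cellV1 c) /\
  forall i j, (i < j < size L)%N -> psub (nth set0 L i) (nth set0 L j).

Lemma K1_chain s : K1simplex s -> chain s.
Proof. by case=> _ [H1 H2]; split=> // c /InE; apply: H1. Qed.

Lemma chain_uniq L : chain L -> uniq L.
Proof.
case=> _ H; apply/negPn/negP=> /(uniqPn set0) [i [j [ij jL E]]].
have [_] := H i j ltac:(by rewrite ij jL); by rewrite E.
Qed.

Lemma chain_rcons r c : chain (rcons r c) ->
  [/\ chain r, cellV1 c & forall l, l \in r -> psub l c].
Proof.
case=> H1 H2; split.
- split=> [l lr|i j /andP[ij jr]]; first by apply: H1; rewrite mem_rcons in_cons lr orbT.
  have := H2 i j; rewrite size_rcons !nth_rcons jr (ltn_trans ij jr) ij /=.
  by apply; apply: ltn_trans jr _.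
- by apply: H1; rewrite mem_rcons in_cons eqxx.
- move=> l lr; have := H2 (index l r) (size r).
  rewrite size_rcons ltnSn index_mem lr !nth_rcons index_mem lr ltnn eqxx nth_index //.
  by apply.
Qed.

Lemma chain_head L c : chain L -> c \in L -> nth set0 L 0 `<=` c.
Proof.
case=> _ H cL; rewrite -(nth_index set0 cL).
case E: (index c L) => [|k]; first by move=> x.
have P : psub (nth set0 L 0) (nth set0 L (index c L)).
  by apply: H; rewrite index_mem cL E.
by case: P; rewrite E.
Qed.

Lemma chain_le L i j : chain L -> (i <= j < size L)%N -> nth set0 L i `<=` nth set0 L j.
Proof.
case=> _ H /andP[]; rewrite leq_eqVlt => /orP[/eqP->//|ij] jL.
  by move=> x.
have P : psub (nth set0 L i) (nth set0 L j) by apply: H; rewrite ij jL.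
by case: P.
Qed.


Lemma qf0 y : qf (0 : M) y = 0.
Proof. by rewrite /qf mulmx0 mul0mx mxE. Qed.

Lemma qfD (A B : M) y : qf (A + B) y = qf A y + qf B y.
Proof. by rewrite /qf mulmxDr mulmxDl mxE. Qed.

Lemma qfZ k (A : M) y : qf (k *: A) y = k * qf A y.
Proof. rewrite /qf.
have -> : forall (u : 'rV[R]_4) (B : 'M[R]_(4,4)), u *m (k *: B) = k *: (u *m B).
  by move=> u B; apply/matrixP=> i j; rewrite !mxE mulr_sumr; apply: eq_bigr => t _; rewrite !mxE mulrCA.
by rewrite -scalemxAl mxE.
Qed.

Lemma qf_sum (I : Type) (L : seq I) (w : I -> R) (F : I -> M) y :
  qf (\sum_(l <- L) w l *: F l) y = \sum_(l <- L) w l * qf (F l) y.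
Proof.
elim: L => [|l L IH]; first by rewrite !big_nil qf0.
by rewrite !big_cons qfD qfZ IH.
Qed.

Lemma hb_inW c : cellV1 c -> inW (b c).
Proof. by move/hb; case. Qed.

Lemma hb_cell c : cellV1 c -> c = cellof (Min (b c)).
Proof. by move/hb; case. Qed.

Lemma hb_in c : cellV1 c -> c (b c).
Proof.
move=> cc; have E := hb_cell cc; rewrite {1}E; split; first exact: hb_inW.
by [].
Qed.

Lemma ge1 l (v : 'rV[int]_4) : cellV1 l -> v != 0 -> 1 <= qf (b l) (toR R v).
Proof. by move/hb_inW => [_ [H _]]; apply: H. Qed.

Lemma gt1 c (v : 'rV[int]_4) : cellV1 c -> v != 0 -> ~ Min (b c) v ->
  1 < qf (b c) (toR R v).
Proof.
move=> cc v0 nM; rewrite lt_neqAle ge1 // andbT; apply/negP=> /eqP E.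
by apply: nM; split.
Qed.

Lemma minsub l c : cellV1 l -> cellV1 c -> l `<=` c -> Min (b c) `<=` Min (b l).
Proof.
move=> cl cc lc; have : c (b l) by apply: lc; apply: hb_in.
by rewrite {1}(hb_cell cc) => -[].
Qed.

Lemma Min_cell_eq c c' : cellV1 c -> cellV1 c' -> Min (b c) = Min (b c') -> c = c'.
Proof. by move=> cc cc' E; rewrite (hb_cell cc) (hb_cell cc') E. Qed.


Definition rep1 (L : seq (set M)) (w : set M -> R) (x : M) :=
  [/\ chain L, (forall c, 0 <= w c), (forall c, c \notin L -> w c = 0)
    & x = \sum_(c <- L) w c *: b c].

Lemma qsum_ge (L : seq (set M)) (w : set M -> R) v :
  (forall l, l \in L -> cellV1 l) -> v != 0 -> (forall c, 0 <= w c) ->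
  \sum_(l <- L) w l <= \sum_(l <- L) w l * qf (b l) (toR R v).
Proof.
move=> cL v0 w0; rewrite big_seq [X in _ <= X]big_seq; apply: ler_sum => l lL.
by rewrite -{1}(mulr1 (w l)); apply: ler_wpM2l => //; apply: ge1 => //; apply: cL.
Qed.

Lemma qsum_eq (L : seq (set M)) (w : set M -> R) c v :
  (forall l, l \in L -> cellV1 l /\ l `<=` c) -> cellV1 c -> Min (b c) v ->
  \sum_(l <- L) w l * qf (b l) (toR R v) = \sum_(l <- L) w l.
Proof.
move=> H cc Mv; rewrite big_seq [RHS]big_seq; apply: eq_bigr => l lL.
have [cl lc] := H l lL; have [_ ->] := minsub cl cc lc Mv; by rewrite mulr1.
Qed.

Lemma le_sum_mem (L : seq (set M)) (w : set M -> R) c :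
  (forall c, 0 <= w c) -> c \in L -> w c <= \sum_(l <- L) w l.
Proof.
move=> w0; elim: L => [//|l L IH]; rewrite in_cons big_cons => /orP[/eqP->|cL].
  by rewrite lerDl sumr_ge0.
by apply: le_trans (IH cL) _; rewrite lerDr.
Qed.

Lemma chain_rcons_sub r c l : chain (rcons r c) -> l \in rcons r c -> cellV1 l /\ l `<=` c.
Proof.
move=> ch; have [chr cc rc] := chain_rcons ch.
rewrite mem_rcons in_cons => /orP[/eqP->|lr]; first by split.
by split; [apply: chr.1 | case: (rc l lr)].
Qed.

Lemma Minchar r c w x v : rep1 (rcons r c) w x -> 0 < w c ->
  (Min (b c) v <-> (v != 0 /\ qf x (toR R v) = \sum_(l <- rcons r c) w l)).
Proof.
case=> ch w0 wout ->; have [chr cc rc] := chain_rcons ch; rewrite qf_sum => wc0.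
split.
- move=> Mv; split; first by case: Mv.
  by apply: qsum_eq Mv => // l; apply: chain_rcons_sub.
- case=> v0 E; apply: contrapT => nM; move: E; rewrite !big_rcons /=.
  have := qsum_ge (fun l lr => chr.1 l lr) v0 w0; have := gt1 cc v0 nM.
  set q := qf _ _; move=> q1 S E.
  have : 0 < w c * (q - 1) by apply: mulr_gt0; rewrite ?subr_gt0.
  lra.
Qed.

Lemma rep1_zero_top r c w x : rep1 (rcons r c) w x -> w c = 0 ->
  rep1 r w x /\ \sum_(l <- rcons r c) w l = \sum_(l <- r) w l.
Proof.
case=> ch w0 wout xE wc0; have [chr cc rc] := chain_rcons ch.
rewrite big_rcons /= wc0 addr0; split=> //; split=> //.
- move=> l; case: (eqVneq l c) => [->|lc] // lr; apply: wout.
  by rewrite mem_rcons in_cons negb_or lc.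
- by rewrite xE big_rcons /= wc0 scale0r addr0.
Qed.

Lemma rep1_peel r c w x : rep1 (rcons r c) w x ->
  rep1 r (fun l => if l == c then 0 else w l) (x - w c *: b c) /\
  \sum_(l <- r) (if l == c then 0 else w l) = \sum_(l <- rcons r c) w l - w c.
Proof.
case=> ch w0 wout xE; have [chr cc rc] := chain_rcons ch.
have E : forall (T : zmodType) (F G : set M -> T),
    \sum_(l <- r) (if l == c then F l else G l) = \sum_(l <- r) G l.
  move=> T F G; rewrite big_seq [RHS]big_seq; apply: eq_bigr => l lr.
  case: eqP => // lc; have [_] := rc l lr; by rewrite lc.
split; last by rewrite E big_rcons /= addrK.
split=> //.
- by move=> l; case: eqP.
- move=> l lr; case: eqP => // /eqP lc; apply: wout.
  by rewrite mem_rcons in_cons negb_or lc.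
- rewrite xE big_rcons /= addrK.
  have := E _ (fun l => 0 *: b l) (fun l => w l *: b l).
  by move=> <-; apply: eq_bigr => l _; case: eqP.
Qed.

Lemma wge r r' c w w' x : rep1 (rcons r c) w x -> rep1 (rcons r' c) w' x ->
  \sum_(l <- rcons r c) w l = \sum_(l <- rcons r' c) w' l -> w' c <= w c.
Proof.
move=> rp rp' Es; rewrite leNgt; apply/negP => lt.
have [ch w0 wout xE] := rp; have [ch' w0' wout' xE'] := rp'.
have [chr cc rc] := chain_rcons ch; have [chr' _ rc'] := chain_rcons ch'.
move: Es; rewrite !big_rcons /=.
case/lastP: r rp ch chr rc xE wout => [|r0 cr] rp ch chr rc xE wout.
  rewrite big_nil add0r => Es.
  have : 0 <= \sum_(l <- r') w' l by apply: sumr_ge0.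
  lra.
have [crc ncr] := rc cr ltac:(by rewrite mem_rcons in_cons eqxx).
have cr1 : cellV1 cr by apply: chr.1; rewrite mem_rcons in_cons eqxx.
have [v [Mv nMv]] : exists v, Min (b cr) v /\ ~ Min (b c) v.
  apply: contrapT => H; apply: ncr; apply: Min_cell_eq => //.
  rewrite eqEsubset; split; last exact: minsub.
  by move=> v Mv; apply: contrapT => nM; apply: H; exists v.
have v0 : v != 0 by case: Mv.
have q1 := gt1 cc v0 nMv.
have E1 : qf x (toR R v) = \sum_(l <- rcons r0 cr) w l + w c * qf (b c) (toR R v).
  rewrite xE qf_sum big_rcons /=; congr (_ + _).
  by apply: qsum_eq Mv => // l; apply: chain_rcons_sub.
have E2 : \sum_(l <- r') w' l + w' c * qf (b c) (toR R v) <= qf x (toR R v).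
  rewrite xE' qf_sum big_rcons /= lerD2r.
  by apply: qsum_ge => // l lr; apply: chr'.1.
move: E1 E2; set q := qf (b c) _; set S := \sum_(l <- rcons r0 cr) w l.
set S' := \sum_(l <- r') w' l => E1 E2 Es.
have : 0 < (w' c - w c) * (q - 1) by apply: mulr_gt0; rewrite subr_gt0.
lra.
Qed.


Lemma rep1_nil L w w' x : rep1 [::] w x -> rep1 L w' x ->
  0 = \sum_(l <- L) w' l -> forall c, w c = w' c.
Proof.
case=> _ _ wout _ [_ w0' wout' _] E c; rewrite wout //.
case: (boolP (c \in L)) => cL; last by rewrite wout'.
by apply/eqP; rewrite eq_le w0' E le_sum_mem.
Qed.

Lemma U1 n : forall L L' w w' x, (size L + size L' <= n)%N ->
  rep1 L w x -> rep1 L' w' x ->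
  \sum_(c <- L) w c = \sum_(c <- L') w' c -> forall c, w c = w' c.
Proof.
elim: n => [|n IH] L L' w w' x.
  case/lastP: L => [|r c]; last by rewrite size_rcons addSn ltn0.
  by move=> _ rp rp'; rewrite big_nil; apply: rep1_nil rp rp'.
case/lastP: L => [|r c]; first by move=> _ rp rp'; rewrite big_nil; apply: rep1_nil rp rp'.
case/lastP: L' => [|r' c'].
  move=> _ rp rp' E c0; symmetry; apply: rep1_nil rp' rp _ c0.
  by rewrite E big_nil.
rewrite !size_rcons addSn addnS ltnS => sz rp rp' Es.
have [_ w0 _ _] := rp; have [_ w0' _ _] := rp'.
have [wc0|wcp] : w c = 0 \/ 0 < w c.
  by have := w0 c; rewrite le0r => /orP[/eqP|]; [left|right].
  have [rp1 E1] := rep1_zero_top rp wc0.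
  apply: IH rp1 rp' _ => //; last by rewrite -E1.
  by rewrite size_rcons addnS.
have [wc0'|wcp'] : w' c' = 0 \/ 0 < w' c'.
  by have := w0' c'; rewrite le0r => /orP[/eqP|]; [left|right].
  have [rp1 E1] := rep1_zero_top rp' wc0'.
  apply: IH rp rp1 _ => //; last by rewrite -E1.
  by rewrite size_rcons addSn.
have cc : cellV1 c by case: rp => ch _ _ _; have [] := chain_rcons ch.
have cc' : cellV1 c' by case: rp' => ch _ _ _; have [] := chain_rcons ch.
have ecc : c = c'.
  apply: Min_cell_eq => //; rewrite eqEsubset; split=> v.
    by move/(Minchar _ rp wcp); rewrite Es; move/(Minchar _ rp' wcp').
  by move/(Minchar _ rp' wcp'); rewrite -Es; move/(Minchar _ rp wcp).
subst c'.
have ew : w c = w' c by apply/eqP; rewrite eq_le (wge rp rp' Es) (wge rp' rp (esym Es)).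
have [rq Eq] := rep1_peel rp; have [rq' Eq'] := rep1_peel rp'.
rewrite ew in rq.
have := IH _ _ _ _ _ (ltnW sz) rq rq'; rewrite Eq Eq' Es ew => /(_ erefl) H l.
by have := H l; case: eqP => [->|].
Qed.


Definition hrep (C : seq (seq (set M))) (t : nat -> R) (x : M) :=
  [/\ (forall i, 0 <= t i), \sum_(i < size C) t i = 1
    & x = \sum_(i < size C) t i *: bary1 b (nth [::] C i)].

Lemma K2_K1 (C : seq (seq (set M))) i : K2simplex C -> (i < size C)%N -> K1simplex (nth [::] C i).
Proof. by case=> _ [H _] iC; apply: H; apply/InE; apply: mem_nth. Qed.

Lemma K2_sub (C : seq (seq (set M))) i j : K2simplex C -> (i <= j < size C)%N ->
  {subset nth [::] C i <= nth [::] C j}.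
Proof.
case=> _ [_ H] /andP[ij jC] c.
case: (ltngtP i j) ij => // [ij _|-> _ //].
have [S _] := H i j ltac:(by rewrite ij jC).
by move/InE/S/InE.
Qed.

Lemma K1_size (s : seq (set M)) : K1simplex s -> (0 < size s)%N.
Proof. by case; case: s. Qed.

Lemma K1_head (s : seq (set M)) : K1simplex s -> nth set0 s 0 \in s.
Proof. by move=> H; apply: mem_nth; apply: K1_size. Qed.

Lemma sumT (V : zmodType) (s T : seq (set M)) (f : set M -> V) :
  uniq s -> uniq T -> {subset s <= T} ->
  \sum_(c <- T) (if c \in s then f c else 0) = \sum_(c <- s) f c.
Proof.
move=> us uT sT; rewrite -big_mkcond -big_filter; apply: perm_big.
apply: uniq_perm; first exact: filter_uniq.
  done.
by move=> c; rewrite mem_filter; case: (boolP (c \in s)) => //= /sT ->.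
Qed.

Definition wt (C : seq (seq (set M))) (t : nat -> R) (c : set M) : R :=
  \sum_(i < size C) t i *
     (if c \in nth [::] C i then (size (nth [::] C i))%:R^-1 else 0).

Lemma sum_const_seq (s : seq (set M)) (k : R) : \sum_(c <- s) k = k *+ size s.
Proof. by elim: s => [|c s IH]; rewrite ?big_nil ?big_cons ?IH ?mulrS. Qed.

Lemma rep_of_hrep (C : seq (seq (set M))) t x : K2simplex C -> hrep C t x ->
  rep1 (nth [::] C (size C).-1) (wt C t) x /\
  \sum_(c <- nth [::] C (size C).-1) wt C t c = 1.
Proof.
move=> K [t0 t1 xE].
have C0 : (0 < size C)%N by case: K; case: (C).
have CT : ((size C).-1 < size C)%N by rewrite prednK.
have subT : forall i : 'I_(size C), {subset nth [::] C i <= nth [::] C (size C).-1}.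
  by move=> i; apply: (K2_sub K); rewrite CT andbT -ltnS prednK.
have uT : forall i : 'I_(size C), uniq (nth [::] C i).
  by move=> i; apply: chain_uniq; apply: K1_chain; apply: K2_K1.
have uTT : uniq (nth [::] C (size C).-1).
  by apply: chain_uniq; apply: K1_chain; apply: K2_K1.
have szi : forall i : 'I_(size C), (size (nth [::] C i))%:R != 0 :> R.
  by move=> i; rewrite pnatr_eq0 -lt0n; apply: K1_size; apply: K2_K1.
split; last first.
  rewrite /wt exchange_big /= -[RHS]t1; apply: eq_bigr => i _.
  rewrite -mulr_sumr; rewrite (sumT _ (uT i) uTT (subT i)).
  by rewrite sum_const_seq -[X in _ * X = _]mulr_natr mulVf ?mulr1.
split.
- by apply: K1_chain; apply: K2_K1.
- move=> c; apply: sumr_ge0 => i _; apply: mulr_ge0 => //.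
  by case: ifP => // _; rewrite invr_ge0 ler0n.
- move=> c cT; apply: big1 => i _.
  by case: ifP => [/subT|]; rewrite ?mulr0 // (negbTE cT).
- rewrite xE /wt; under [RHS]eq_bigr do rewrite scaler_suml.
  rewrite exchange_big /=; apply: eq_bigr => i _.
  rewrite /bary1 scalerA.
  have -> : \sum_(c <- nth [::] C (size C).-1)
      (t i * (if c \in nth [::] C i then (size (nth [::] C i))%:R^-1 else 0)) *: b c
    = t i *: \sum_(c <- nth [::] C (size C).-1)
      (if c \in nth [::] C i then (size (nth [::] C i))%:R^-1 *: b c else 0).
    rewrite scaler_sumr; apply: eq_bigr => c _.
    by case: ifP; rewrite ?mulr0 ?scale0r ?scaler0 // scalerA.
  by rewrite (sumT _ (uT i) uTT (subT i)) -scaler_sumr scalerA.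
Qed.


Lemma first_pos (C : seq (seq (set M))) t x : hrep C t x ->
  exists k, [/\ (k < size C)%N, 0 < t k & forall i, (i < k)%N -> t i = 0].
Proof.
case=> t0 t1 _.
have ex : exists k, (k < size C)%N && (0 < t k).
  apply: contrapT => H.
  have : \sum_(i < size C) t i = 0.
    apply: big1 => i _; apply/eqP; rewrite eq_le t0 andbT leNgt.
    by apply/negP => ti; apply: H; exists i; rewrite ltn_ord ti.
  by rewrite t1 => /eqP; rewrite oner_eq0.
case: (ex_minnP ex) => k /andP[kC tk] mn.
exists k; split=> // i ik; apply/eqP; rewrite eq_le t0 andbT leNgt.
apply/negP => ti; have := mn i; rewrite ti (ltn_trans ik kC) => /(_ erefl).
by rewrite leqNgt ik.
Qed.

Lemma argmax (C : seq (seq (set M))) t x k c : K2simplex C -> hrep C t x ->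
  (k < size C)%N -> 0 < t k -> (forall i, (i < k)%N -> t i = 0) ->
  (c \in nth [::] C k <-> forall c', wt C t c' <= wt C t c).
Proof.
move=> K [t0 _ _] kC tk tlt.
set Mx := \sum_(i < size C) t i * (size (nth [::] C i))%:R^-1.
have inv0 : forall i, 0 <= (size (nth [::] C i))%:R^-1 :> R.
  by move=> i; rewrite invr_ge0 ler0n.
have win : forall c, c \in nth [::] C k -> wt C t c = Mx.
  move=> c0 ck; apply: eq_bigr => i _.
  case: (ltnP i k) => [ik|ki]; first by rewrite tlt // !mul0r.
  by rewrite (K2_sub K (i := k) (j := i)) ?ki ?ltn_ord.
have wle : forall c, wt C t c <= Mx.
  move=> c0; apply: ler_sum => i _; apply: ler_wpM2l => //.
  by case: ifP.
have wout : forall c, c \notin nth [::] C k -> wt C t c < Mx.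
  move=> c0 ck; rewrite /wt /Mx (bigD1 (Ordinal kC)) //= [X in _ < X](bigD1 (Ordinal kC)) //=.
  apply: ltr_leD.
    rewrite (negbTE ck) mulr0; apply: mulr_gt0 => //; rewrite invr_gt0 ltr0n.
    by apply: K1_size; apply: K2_K1.
  apply: ler_sum => i _; apply: ler_wpM2l => //.
  by case: ifP.
have hk : nth set0 (nth [::] C k) 0 \in nth [::] C k by apply: K1_head; apply: K2_K1.
split.
  by move=> ck c'; rewrite (win _ ck) wle.
move=> H; apply: contrapT => /negP ck.
have := H (nth set0 (nth [::] C k) 0); rewrite (win _ hk) => /(le_lt_trans)/(_ (wout _ ck)).
by rewrite ltxx.
Qed.

Lemma head_sub (C : seq (seq (set M))) a k s : K2simplex C -> List.In s C ->
  in_cell s a -> (k < size C)%N -> nth set0 (nth [::] C k) 0 `<=` a.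
Proof.
move=> K /InE sC sa kC.
have jC : (index s C < size C)%N by rewrite index_mem.
have Ks : K1simplex s by rewrite -(nth_index [::] sC); apply: K2_K1.
have Kk := K2_K1 K kC.
case: (leqP (index s C) k) => jk.
  have S : {subset s <= nth [::] C k}.
    by rewrite -{1}(nth_index [::] sC); apply: (K2_sub K); rewrite jk kC.
  have h1 := S _ (K1_head Ks).
  apply: subset_trans (chain_head (K1_chain Kk) h1) _.
  by apply: sa; apply/InE; apply: K1_head.
have S : {subset nth [::] C k <= s}.
  by rewrite -{1}(nth_index [::] sC); apply: (K2_sub K); rewrite (ltnW jk) jC.
by apply: sa; apply/InE; apply: S; apply: K1_head.
Qed.


Lemma sum_map_ord (V : zmodType) (C : seq (seq (set M))) (F : nat -> V) :
  \sum_(j < size (map (bary1 b) C)) F j = \sum_(i < size C) F i.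
Proof. by rewrite -!(big_mkord xpredT) size_map. Qed.

Lemma NbhdE a x : Nbhd b a x <-> exists C t,
  [/\ K2simplex C, exists s, List.In s C /\ in_cell s a & hrep C t x].
Proof.
split.
- case=> C [K [sa [t [t0 [t1 xE]]]]].
  pose t' (i : nat) := odflt 0 (omap t (insub i)).
  have tt : forall j, t' (val j) = t j by move=> j; rewrite /t' valK.
  exists C, t'; split=> //; split.
  + by move=> i; rewrite /t'; case: insub => //=.
  + by rewrite -sum_map_ord -t1; apply: eq_bigr => j _; rewrite tt.
  + rewrite xE; transitivity
      (\sum_(j < size (map (bary1 b) C)) t' j *: nth 0 (map (bary1 b) C) j).
      by apply: eq_bigr => j _; rewrite tt.
    rewrite (sum_map_ord C (fun i => t' i *: nth 0 (map (bary1 b) C) i)).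
    by apply: eq_bigr => j _; rewrite (nth_map [::]).
- case=> C [t [K sa [t0 t1 xE]]]; exists C; split=> //; split=> //.
  exists (fun j => t j); split=> //; split.
  + by rewrite (sum_map_ord C t).
  + rewrite xE (sum_map_ord C (fun i => t i *: nth 0 (map (bary1 b) C) i)).
    by apply: eq_bigr => j _; rewrite (nth_map [::]).
Qed.

Lemma sum_drop (V : zmodType) n k (F : nat -> V) : (k <= n)%N ->
  (forall i, (i < k)%N -> F i = 0) -> \sum_(i < n) F i = \sum_(i < n - k) F (k + i)%N.
Proof.
move=> kn H; rewrite -!(big_mkord xpredT) (big_cat_nat (n := k)) //=.
rewrite big_nat_cond big1 ?add0r; last by move=> i /andP[/andP[_ ik] _]; apply: H.
rewrite -{1}(add0n k) big_addn big_mkord; apply: eq_bigr => i _; by rewrite addnC.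
Qed.

Lemma hrep_drop (C : seq (seq (set M))) t x k : hrep C t x -> (k < size C)%N ->
  (forall i, (i < k)%N -> t i = 0) -> hrep (drop k C) (fun i => t (k + i)%N) x.
Proof.
move=> [t0 t1 xE] kC tlt; split=> //.
- by rewrite size_drop -t1 (sum_drop (ltnW kC) tlt).
- rewrite xE size_drop (sum_drop (F := fun i => t i *: bary1 b (nth [::] C i)) (ltnW kC)).
    by apply: eq_bigr => i _; rewrite nth_drop.
  by move=> i ik; rewrite tlt ?scale0r.
Qed.

Lemma hrep_cons (C : seq (seq (set M))) t x e : hrep C t x ->
  hrep ([:: e] :: C) (fun i => if i is j.+1 then t j else 0) x.
Proof.
move=> [t0 t1 xE]; split.
- by case.
- by rewrite /= big_ord_recl /= add0r -t1.
- by rewrite /= big_ord_recl /= scale0r add0r xE.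
Qed.

Lemma K2_drop (C : seq (seq (set M))) k : K2simplex C -> (k < size C)%N ->
  K2simplex (drop k C).
Proof.
move=> K kC; have [_ [H1 H2]] := K; split; [|split].
- by move=> E; have := size_drop k C; rewrite E /= => /eqP; rewrite eq_sym subn_eq0 leqNgt kC.
- by move=> s /InE sd; apply: H1; apply/InE; apply: mem_drop sd.
- move=> i j /andP[ij]; rewrite size_drop => jC; rewrite !nth_drop; apply: H2.
  by rewrite ltn_add2l ij /= -ltn_subRL.
Qed.

Lemma K2_cons (C : seq (seq (set M))) e : K2simplex C ->
  e \in nth [::] C 0 -> ~ {subset nth [::] C 0 <= [:: e]} -> K2simplex ([:: e] :: C).
Proof.
move=> K eC nsub; have [Cn [H1 H2]] := K.
have C0 : (0 < size C)%N by case: (C) Cn.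
have ce : cellV1 e.
  by have [_ [H _]] := K2_K1 K C0; apply: H; apply/InE.
split=> //; split.
- move=> s /= [<-|]; last exact: H1.
  split=> //; split; first by move=> a [<-|].
  by move=> i j /andP[ij]; rewrite /= ltnS leqn0 => /eqP j0; rewrite j0 in ij.
- case=> [|i] [|j] //=; last first.
    by rewrite !ltnS => ij; apply: H2.
  rewrite ltnS => jC; split.
    move=> a [<-|//]; apply/InE; apply: (K2_sub K (i := 0)) => //.
  move=> S; apply: nsub => c c0.
  have : c \in nth [::] C j by apply: (K2_sub K (i := 0)) => //.
  by move/InE/S/InE.
Qed.


Lemma Nbhd_meet a1 a2 x : Nbhd b a1 x -> Nbhd b a2 x -> Nbhd b (a1 `&` a2) x.
Proof.
move=> /NbhdE [C1 [t1 [K1 [s1 [s1C s1a]] h1]]] /NbhdE [C2 [t2 [K2 [s2 [s2C s2a]] h2]]].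
have [k1 [k1C tk1 tlt1]] := first_pos h1.
have [k2 [k2C tk2 tlt2]] := first_pos h2.
have [rp1 sm1] := rep_of_hrep K1 h1; have [rp2 sm2] := rep_of_hrep K2 h2.
have ew := U1 (leqnn _) rp1 rp2 (etrans sm1 (esym sm2)).
have ewf : wt C1 t1 = wt C2 t2 by apply: funext.
set d1 := nth [::] C1 k1; set d2 := nth [::] C2 k2.
have md : forall c, c \in d1 -> c \in d2.
  move=> c /(argmax c K1 h1 k1C tk1 tlt1); rewrite ewf.
  by move/(argmax c K2 h2 k2C tk2 tlt2).
have md' : forall c, c \in d2 -> c \in d1.
  move=> c /(argmax c K2 h2 k2C tk2 tlt2); rewrite -ewf.
  by move/(argmax c K1 h1 k1C tk1 tlt1).
set e := nth set0 d1 0.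
have Kd1 := K2_K1 K1 k1C; have Kd2 := K2_K1 K2 k2C.
have ea1 : e `<=` a1 by apply: head_sub s1C s1a k1C.
have ea2 : e `<=` a2.
  apply: subset_trans (head_sub K2 s2C s2a k2C).
  by apply: chain_head (K1_chain Kd1) _; apply: md'; apply: K1_head.
have eA : e `<=` a1 `&` a2 by move=> y ey; split; [apply: ea1|apply: ea2].
have hd := hrep_drop h1 k1C tlt1.
have Kd := K2_drop K1 k1C.
have dE : drop k1 C1 = d1 :: drop k1.+1 C1 by rewrite (drop_nth [::]).
apply/NbhdE.
case: (EM {subset d1 <= [:: e]}) => [sub|nsub].
  exists (drop k1 C1), (fun i => t1 (k1 + i)%N); split=> //.
  exists d1; split; first by rewrite dE; left.
  by move=> c /InE /sub; rewrite inE => /eqP ->.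
exists ([:: e] :: drop k1 C1), (fun i => if i is j.+1 then t1 (k1 + j)%N else 0).
split; last exact: hrep_cons.
  apply: K2_cons => //; rewrite dE //=; first by apply: K1_head.
  by exists [:: e]; split; [left | move=> c [<-|]].
Qed.

Lemma relint_mono (N N' : set M) : N `<=` N' -> relint N `<=` relint N'.
Proof. by move=> S x [Nx [e [e0 H]]]; split; [apply: S | exists e; split=> // y Vy /H /S; apply]. Qed.

Lemma Nbhd_mono a a' : a `<=` a' -> Nbhd b a `<=` Nbhd b a'.
Proof.
move=> S x [C [K [[s [sC sa]] hx]]]; exists C; split=> //; split=> //.
by exists s; split=> // c cs; apply: subset_trans (sa c cs) S.
Qed.

End Proof1.

Theorem lemma3p5 (R : realType) (b : set 'M[R]_4 -> 'M[R]_4)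
  (hb : forall a, cellV1 a -> opencell a (b a))
  (a1 a2 : set 'M[R]_4) :
  cellV1 a1 -> cellV1 a2 -> a1 <> a2 -> cellV1 (a1 `&` a2) ->
  Nint b a1 `&` Nint b a2 = Nint b (a1 `&` a2).
Proof.
move=> _ _ _ _; rewrite eqEsubset; split.
- move=> x [[N1 [e1 [e1p H1]]] [N2 [e2 [e2p H2]]]].
  split; first exact: (Nbhd_meet hb).
  exists (Num.min e1 e2); split; first by rewrite lt_min e1p e2p.
  move=> y Vy Hy; apply: (Nbhd_meet hb).
    by apply: (H1 y Vy) => i j; have := Hy i j; rewrite lt_min => /andP[].
  by apply: (H2 y Vy) => i j; have := Hy i j; rewrite lt_min => /andP[].
- move=> x Hx; split; apply: (relint_mono _ Hx); apply: Nbhd_mono => y [] //.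
Qed.
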